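(* For every $d\ge 3$, $\mu_t(\mathit{CCC}_d)=0$; that is, the only total mutual-visibility set of $\mathit{CCC}_d$ is the empty set.
   Context: Binary strings $x=x_0\cdots x_{d-1}$ have positions $0,\dots,d-1$ from the left; $x(i)$ is $x$ with bit $i$ complemented. $\mathit{CCC}_d$ ($d\ge 3$) has vertex set $\{[\ell,x]:\ell\in\{0,\dots,d-1\},\ x\in\{0,1\}^d\}$; $[\ell,x]$ and $[\ell',x']$ are adjacent iff either $x=x'$ and $\ell'\equiv\ell\pm1\pmod d$, or $\ell=\ell'$ and $x'=x(\ell)$. For a connected graph $G$ and $X\subseteq V(G)$, two vertices $x,y$ are $X$-visible if some shortest $x,y$-path has no internal vertex in $X$. $X$ is a total mutual-visibility set if every two vertices of $V(G)$ are $X$-visible; $\mu_t(G)$ is the maximum size of a total mutual-visibility set. *)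

(* Defs.v *)
From mathcomp Require Import all_boot.
Set Implicit Arguments. Unset Strict Implicit. Unset Printing Implicit Defensive.

(* Vertices of CCC_d: pairs [l, x] with l in {0..d-1} and x a binary string
   of length d, represented as a function from positions 'I_d to bool. *)
Definition cccV (d : nat) : finType := ('I_d * {ffun 'I_d -> bool})%type.

Definition flip (d : nat) (x : {ffun 'I_d -> bool}) (i : 'I_d) : {ffun 'I_d -> bool} :=
  [ffun j => if j == i then ~~ x j else x j].

Definition ccc_adj (d : nat) : rel (cccV d) := fun u v =>
  ((u.2 == v.2) &&
     ((val v.1 == (val u.1).+1 %% d) || (val u.1 == (val v.1).+1 %% d)))
  || ((u.1 == v.1) && (v.2 == flip u.2 u.1)).

Section Graph.
Variables (T : finType) (e : rel T).

(* p is a walk from x to y: x :: p is an e-path ending in y; its length is size p *)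
Definition is_walk (x : T) (p : seq T) (y : T) : Prop :=
  path e x p /\ last x p = y.

(* shortest x,y-path: a walk of minimum length (such walks are paths) *)
Definition is_shortest (x : T) (p : seq T) (y : T) : Prop :=
  is_walk x p y /\ forall q, is_walk x q y -> size p <= size q.

(* internal vertices of the walk x :: p (all vertices except the two ends) *)
Definition internal (p : seq T) : seq T := take (size p).-1 p.

Definition visible (X : {set T}) (x y : T) : Prop :=
  exists p, is_shortest x p y /\ all (fun v => v \notin X) (internal p).

Definition total_mutual_visibility (X : {set T}) : Prop :=
  forall x y, visible X x y.
End Graph.

(* Main.v *)
From Stdlib Require Import Classical.
Require Import Defs.
From mathcomp Require Import all_boot.
From mathcomp Require Import zify.
Set Implicit Arguments. Unset Strict Implicit. Unset Printing Implicit Defensive.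

Lemma shortest_exists (T : finType) (e : rel T) x y p :
  is_walk e x p y -> exists q, is_shortest e x q y.
Proof.
move: {2}(size p) (leqnn (size p)) => n; elim: n p => [|n IH] p Hs Hw.
  exists p; split=> // q _; rewrite (leq_trans Hs) //.
destruct (classic (forall q, is_walk e x q y -> size p <= size q)) as [H|H].
  by exists p.
apply not_all_ex_not in H; case: H => q Hq.
have Hwq : is_walk e x q y by apply: NNPP => Hn; apply: Hq => Hw'; case: (Hn Hw').
have Hlt : size q < size p by rewrite ltnNge; apply/negP => Hle; apply: Hq.
apply: (IH q) => //; rewrite -ltnS (leq_trans Hlt) //.
Qed.

Lemma flip_same d (x : {ffun 'I_d -> bool}) i : flip x i i = ~~ x i.
Proof. by rewrite /flip ffunE eqxx. Qed.

Lemma flip_other d (x : {ffun 'I_d -> bool}) i j : j != i -> flip x i j = x j.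
Proof. by rewrite /flip ffunE => /negbTE ->. Qed.

Lemma flip_neq d (x : {ffun 'I_d -> bool}) i : flip x i != x.
Proof.
apply/eqP => /ffunP /(_ i); rewrite flip_same; by case: (x i).
Qed.

Lemma flipK d (x : {ffun 'I_d -> bool}) i : flip (flip x i) i = x.
Proof.
apply/ffunP => j; rewrite /flip !ffunE; case: eqP => // ->; by rewrite negbK.
Qed.

Lemma level_conn d (hd : 0 < d) k (l l' : 'I_d) x :
  val l' = (l + k) %% d -> connect (@ccc_adj d) (l, x) (l', x).
Proof.
elim: k l' => [|k IH] l' Hl'.
  have -> : l' = l by apply: val_inj; rewrite Hl' addn0 modn_small.
  exact: connect0.
have Hm : (l + k) %% d < d by rewrite ltn_pmod.
apply: (connect_trans (IH (Ordinal Hm) erefl)).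
apply: connect1; rewrite /ccc_adj /= eqxx /= Hl'.
by rewrite addnS -[((l + k) %% d).+1]addn1 modnDml addn1 eqxx.
Qed.

Lemma level_conn' d (hd : 0 < d) (l l' : 'I_d) x :
  connect (@ccc_adj d) (l, x) (l', x).
Proof.
apply: (@level_conn d hd (l' + d - l)).
have Hl := ltn_ord l.
have -> : l + (l' + d - l) = l' + d * 1 by lia.
by rewrite muln1 modnDr modn_small.
Qed.

Lemma bits_conn d (hd : 0 < d) n (l : 'I_d) (x y : {ffun 'I_d -> bool}) :
  #|[set j | x j != y j]| <= n -> connect (@ccc_adj d) (l, x) (l, y).
Proof.
elim: n l x => [|n IH] l x Hc.
  have -> : x = y.
    apply/ffunP => j; apply/eqP; apply: negbNE; apply/negP => Hj.
    have : j \in [set j | x j != y j] by rewrite inE.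
    by move: Hc; rewrite leqn0 cards_eq0 => /eqP ->; rewrite inE.
  exact: connect0.
case: (set_0Vmem [set j | x j != y j]) => [H0|[i Hi]].
  apply: IH; by rewrite H0 cards0.
apply: (connect_trans (level_conn' hd l i x)).
have Hf : connect (@ccc_adj d) (i, x) (i, flip x i).
  by apply: connect1; rewrite /ccc_adj /= !eqxx orbT.
apply: (connect_trans Hf).
have Hs : [set j | flip x i j != y j] = [set j | x j != y j] :\ i.
  apply/setP => j; rewrite !inE; case: (eqVneq j i) => [->|Hji] /=.
    move: Hi; rewrite inE flip_same; by case: (x i); case: (y i).
  by rewrite flip_other.
have Hc' : #|[set j | flip x i j != y j]| <= n.
  move: Hc; rewrite Hs (cardsD1 i [set j | x j != y j]) Hi /= add1n ltnS //.
apply: connect_trans (IH i (flip x i) Hc') (level_conn' hd i l y).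
Qed.

Lemma ccc_conn d (hd : 0 < d) (u v : cccV d) : connect (@ccc_adj d) u v.
Proof.
case: u v => l x [l' y].
have H1 := @bits_conn d hd _ l x y (leqnn _).
exact: (connect_trans H1 (level_conn' hd l l' y)).
Qed.

Theorem corollary4p5 (d : nat) (hd : 3 <= d) :
  total_mutual_visibility (@ccc_adj d) set0 /\
  forall X : {set cccV d}, total_mutual_visibility (@ccc_adj d) X -> X = set0.
Proof.
have hd0 : 0 < d by lia.
split.
  move=> u v; have /connectP [p Hp Hl] := ccc_conn hd0 u v.
  have [q Hq] := @shortest_exists _ (@ccc_adj d) u v p (conj Hp (esym Hl)).
  exists q; split=> //; apply/allP => w _; by rewrite in_set0.
move=> X HX; apply/setP => v; rewrite in_set0; apply/negP => Hv.
case: v Hv => l x Hv.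
have Hm : l.+1 %% d < d by rewrite ltn_pmod.
set l1 := Ordinal Hm.
have Hl1 : (l1 == l) = false.
  apply/eqP => /(congr1 val) /=; have := ltn_ord l.
  rewrite leq_eqVlt => /orP [/eqP Hd|Hlt]; first by rewrite Hd modnn; lia.
  by rewrite modn_small //; lia.
have [p [[[Hw Hlast] Hmin] Hall]] := HX (l, flip x l) (l1, x).
have Hsz : size p <= 2.
  apply: (Hmin [:: (l, x); (l1, x)]); split => //=.
  rewrite /ccc_adj /= !eqxx flipK !eqxx /=.
  by rewrite ?orbT.
clear Hmin; case: p Hw Hlast Hsz Hall => [|a [|b [|c p]]] //=.
- move=> _ [] H; by move: Hl1; rewrite -H eqxx.
- rewrite andbT /ccc_adj => /orP [/andP [/eqP H _]|/andP [/eqP H _]] Ha;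
    move: H; rewrite Ha /=.
    by move=> H; move: (flip_neq x l); rewrite H eqxx.
  by move=> H; move: Hl1; rewrite H eqxx.
- move=> /andP [Hua /andP [Hab _]] Hb _; rewrite andbT => Ha.
  move: Hab; rewrite Hb; case: a Hua Ha => m z.
  rewrite /ccc_adj /= => Hua Ha Haw.
  case/orP: Hua => /andP [/eqP Hz Hlev].
    subst z; case/orP: Haw => /andP [/eqP H1 H2].
      by move: (flip_neq x l); rewrite H1 eqxx.
    move: H2 => /eqP H2; subst m.
    have : flip (flip x l) l1 l = x l by rewrite -H2.
    rewrite flip_other; last by rewrite eq_sym Hl1.
    rewrite flip_same; by case: (x l).
  move: Hlev; rewrite flipK => /eqP Hzx; subst m z.
  by move: Ha; rewrite Hv.
Qed.
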